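(* Let $p\ge1$, $n,K\in\mathbb{N}$, $\Omega\subseteq\mathbb{R}^d$ compact and $z\in\mathbb{R}^d\setminus\Omega$. Let $f$ be a depth-$K$ MPNN on $G_{\le n}(\Omega)$ whose aggregation functions $\phi^{(k)}$, combine functions $\psi^{(k)}$ and readout are jointly continuous in their inputs and parameters, with parameters ranging over compact sets. For $0\le k\le K$ let $\Omega_k$ be the set of all feature vectors $x_v^{(k)}$ attainable after $k$ message passing layers, over all graphs in $G_{\le n}(\Omega)$, all nodes and all parameter choices, and let $z_k\notin\Omega_k$. Then for each $k$ there exist constants $C\ge c>0$ such that for every $G\in G_{\le n}(\Omega)$, every $v\in V_G$ and every parameter choice, $$C\cdot TD\big(T_v^{(k)},\bar T_z\big)\ \ge\ \|z_k-x_v^{(k)}\|_p\ \ge\ c\cdot TD\big(T_v^{(k)},\bar T_z\big).$$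
   Context: $G_{\le n}(\Omega)$ is the set of graphs $G=(V,E,X)$ with $|V|\le n$ and node features $x_v\in\Omega$; $\mathcal N_v$ is the multiset of neighbors of $v$. An MPNN of depth $K$ computes $x_v^{(0)}=x_v$ and, for $k=1,\dots,K$, $c_v^{(k)}=\phi^{(k)}(\{\!\!\{ x_u^{(k-1)}:u\in\mathcal N_v\}\!\!\})$, $x_v^{(k)}=\psi^{(k)}(x_v^{(k-1)},c_v^{(k)})$, and outputs $\upsilon(\{\!\!\{ x_v^{(K)}:v\in V\}\!\!\})$. Computation trees: $T_v^{(0)}$ is a single root node with feature $x_v$; $T_v^{(k)}$ is obtained from $T_v^{(k-1)}$ by attaching to each leaf (corresponding to a graph node $u$) children corresponding to the neighbors of $u$ in $G$, each carrying its feature from $G$. The blank tree $\bar T_z$ is a single node with feature $z$. For a rooted tree $T$ with root $r$, $\mathcal T_r$ is the multiset of subtrees rooted at the children of $r$. For multisets of trees $A,B$ of size at most $n$, $W^{(\bar T_z)}_{TD,1}(A,B)=\min_{\tau\in S_n}\sum_{j=1}^n TD(A'_j,B'_{\tau(j)})$ where $A',B'$ are $A,B$ padded with copies of $\bar T_z$ to exactly $n$ elements. The tree distance is defined recursively: $TD(T_a,T_b)=\|x_a-x_b\|_p+W^{(\bar T_z)}_{TD,1}(\mathcal T_a,\mathcal T_b)$ if the maximal depth of $T_a,T_b$ is positive, and $TD(T_a,T_b)=\|x_a-x_b\|_p$ otherwise, where $x_a,x_b$ are the root features. *)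

(* Defs.v *)
From HB Require Import structures.
From mathcomp Require Import all_boot all_order all_algebra all_fingroup.
From mathcomp Require Import all_classical all_reals all_analysis.
Set Implicit Arguments. Unset Strict Implicit. Unset Printing Implicit Defensive.
Import Order.TTheory GRing.Theory Num.Theory.
Import numFieldNormedType.Exports.
Local Open Scope classical_set_scope.
Local Open Scope ring_scope.

Section Defs.
Variable R : realType.

Definition pnorm (p : R) (m : nat) (x : 'rV[R]_m) : R :=
  (\sum_(i < m) `|x ord0 i| `^ p) `^ p^-1.

Definition graph_ok (n : nat) (d : nat) (Omega : set 'rV[R]_d)
  (m : nat) (adj : rel 'I_m) (X : 'I_m -> 'rV[R]_d) : Prop :=
  [/\ (m <= n)%N, (forall u v, adj u v = adj v u), (forall v, ~~ adj v v)
    & (forall v, Omega (X v))].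

(** Neighbours of v, in enumeration order (a representative of the multiset). *)
Definition nbrs (m : nat) (adj : rel 'I_m) (v : 'I_m) : seq 'I_m :=
  [seq u <- enum 'I_m | adj v u].

Fixpoint feat (dim pd cd : nat -> nat)
  (phi : forall k, 'rV[R]_(pd k) -> seq 'rV[R]_(dim k) -> 'rV[R]_(cd k))
  (psi : forall k, 'rV[R]_(pd k) -> 'rV[R]_(dim k) -> 'rV[R]_(cd k) -> 'rV[R]_(dim k.+1))
  (theta : forall k, 'rV[R]_(pd k))
  (m : nat) (adj : rel 'I_m) (X : 'I_m -> 'rV[R]_(dim 0%N)) (k : nat)
  : 'I_m -> 'rV[R]_(dim k) :=
  match k return 'I_m -> 'rV[R]_(dim k) with
  | 0%N => X
  | k'.+1 => fun v =>
      psi k' (theta k') (feat phi psi theta adj X k' v)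
        (phi k' (theta k') [seq feat phi psi theta adj X k' u | u <- nbrs adj v])
  end.

Definition params_ok (K : nat) (pd : nat -> nat) (Theta : forall k, set 'rV[R]_(pd k))
  (theta : forall k, 'rV[R]_(pd k)) : Prop :=
  forall j, (j < K)%N -> Theta j (theta j).

Definition attainable (n K : nat) (dim pd cd : nat -> nat)
  (Omega : set 'rV[R]_(dim 0%N))
  (phi : forall k, 'rV[R]_(pd k) -> seq 'rV[R]_(dim k) -> 'rV[R]_(cd k))
  (psi : forall k, 'rV[R]_(pd k) -> 'rV[R]_(dim k) -> 'rV[R]_(cd k) -> 'rV[R]_(dim k.+1))
  (Theta : forall k, set 'rV[R]_(pd k)) (k : nat) : set 'rV[R]_(dim k) :=
  [set x | exists (m : nat) (adj : rel 'I_m) (X : 'I_m -> 'rV[R]_(dim 0%N))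
             (v : 'I_m) (theta : forall j, 'rV[R]_(pd j)),
     [/\ graph_ok n Omega adj X, params_ok K Theta theta
       & x = feat phi psi theta adj X k v]].

(** A function of multisets represented on sequences: invariant under permutation. *)
Definition multiset_fun (A B C : eqType) (f : A -> seq B -> C) : Prop :=
  forall a s t, perm_eq s t -> f a s = f a t.

Definition rows_of (m d : nat) (M : 'M[R]_(m, d)) : seq 'rV[R]_d :=
  [seq row i M | i <- enum 'I_m].

End Defs.
Arguments attainable [R] n K [dim pd cd] Omega phi psi Theta k _.

(** Rooted trees with labels in T (children as a list, read as a multiset). *)
Inductive ftree (T : Type) := FNode of T & seq (ftree T).
Arguments FNode {T}.

Definition root_lbl T (t : ftree T) : T := let: FNode x _ := t in x.
Definition children T (t : ftree T) : seq (ftree T) := let: FNode _ c := t in c.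

Fixpoint depth T (t : ftree T) : nat :=
  match t with
  | FNode _ [::] => 0%N
  | FNode _ ch => (foldr maxn 0%N (map (@depth T) ch)).+1
  end.

Fixpoint tmap T U (f : T -> U) (t : ftree T) : ftree U :=
  match t with FNode x ch => FNode (f x) (map (tmap f) ch) end.

(** One step of computation-tree growth: attach to every leaf (graph node u)
    children corresponding to the neighbours of u. *)
Fixpoint grow (m : nat) (adj : rel 'I_m) (t : ftree 'I_m) : ftree 'I_m :=
  match t with
  | FNode u [::] => FNode u [seq FNode w [::] | w <- nbrs adj u]
  | FNode u ch => FNode u (map (grow adj) ch)
  end.

Definition comp_tree (m d : nat) (R : Type) (adj : rel 'I_m) (X : 'I_m -> 'rV[R]_d)
  (k : nat) (v : 'I_m) : ftree 'rV[R]_d :=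
  tmap X (iter k (grow adj) (FNode v [::])).

Section TreeDist.
Variable R : realType.
Local Open Scope ring_scope.

Definition blank_tree (d : nat) (z : 'rV[R]_d) : ftree 'rV[R]_d := FNode z [::].

(** W^{(blank z)}_{TD,1}(A,B): pad A, B with blank trees to n elements,
    minimise over tau in S_n the sum of TD(A'_j, B'_{tau j}). *)
Definition Wdist (n d : nat) (z : 'rV[R]_d)
  (TD : ftree 'rV[R]_d -> ftree 'rV[R]_d -> R) (A B : seq (ftree 'rV[R]_d)) : R :=
  let S (tau : 'S_n) := \sum_(j < n) TD (nth (blank_tree z) A j)
                                       (nth (blank_tree z) B (tau j)) in
  \big[Num.min/ S 1%g]_(tau : 'S_n) S tau.

(** Tree distance with fuel f (f >= max depth gives the recursive definition). *)
Fixpoint TDf (p : R) (n d : nat) (z : 'rV[R]_d) (f : nat)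
  (a b : ftree 'rV[R]_d) : R :=
  match f with
  | 0%N => pnorm p (root_lbl a - root_lbl b)
  | f'.+1 =>
      if (0 < maxn (depth a) (depth b))%N
      then pnorm p (root_lbl a - root_lbl b)
           + Wdist n z (TDf p n z f') (children a) (children b)
      else pnorm p (root_lbl a - root_lbl b)
  end.

Definition TD (p : R) (n d : nat) (z : 'rV[R]_d) (a b : ftree 'rV[R]_d) : R :=
  TDf p n z (maxn (depth a) (depth b)) a b.

End TreeDist.

(* Main.v *)
Require Import Defs.
From HB Require Import structures.
From mathcomp Require Import all_boot all_order all_algebra all_fingroup.
From mathcomp Require Import all_classical all_reals all_analysis.
Import Order.TTheory GRing.Theory Num.Theory.
Import numFieldNormedType.Exports.
Local Open Scope classical_set_scope.
Local Open Scope ring_scope.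
Set Implicit Arguments. Unset Strict Implicit. Unset Printing Implicit Defensive.
Section Part1.
Variable R : realType.

Lemma pnorm_ge0 (p : R) m (x : 'rV[R]_m) : 0 <= pnorm p x.
Proof. exact: powR_ge0. Qed.

Lemma Wdist_ge0 n d (z : 'rV[R]_d) (TDx : ftree 'rV[R]_d -> ftree 'rV[R]_d -> R) A B :
  (forall a b, 0 <= TDx a b) -> 0 <= Wdist n z TDx A B.
Proof.
move=> H; rewrite /Wdist; elim/big_ind: _ => //.
- by apply: sumr_ge0 => j _.
- by move=> x y hx hy; rewrite le_min hx hy.
- by move=> tau _; apply: sumr_ge0 => j _.
Qed.

Lemma TDf_ge0 (p : R) n d (z : 'rV[R]_d) f a b : 0 <= TDf p n z f a b.
Proof.
elim: f a b => [|f IH] a b /=; first exact: pnorm_ge0.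
case: ifP => _; last exact: pnorm_ge0.
by apply: addr_ge0; [exact: pnorm_ge0| exact: Wdist_ge0].
Qed.

Lemma TDf_root (p : R) n d (z : 'rV[R]_d) f a b :
  pnorm p (root_lbl a - root_lbl b) <= TDf p n z f a b.
Proof.
case: f => [|f] /=; first by [].
case: ifP => _ //; rewrite lerDl; apply: Wdist_ge0 => *; exact: TDf_ge0.
Qed.

Lemma iter_grow_S m (adj : rel 'I_m) k v :
  iter k.+1 (grow adj) (FNode v [::]) =
  FNode v [seq iter k (grow adj) (FNode u [::]) | u <- nbrs adj v].
Proof.
elim: k v => [|k IH] v; first by [].
rewrite iterS IH; case E: (nbrs adj v) => [|u l] /=; first by rewrite E.
by rewrite -map_comp.
Qed.

Lemma comp_tree_root m d (adj : rel 'I_m) (X : 'I_m -> 'rV[R]_d) k v :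
  root_lbl (comp_tree adj X k v) = X v.
Proof. by case: k => [|k]; rewrite /comp_tree // iter_grow_S. Qed.

Definition Bnd (M : R) (n k : nat) := iter k (fun b => M + n%:R * b) M.

Lemma Bnd_ge (M : R) n k : 0 <= M -> M <= Bnd M n k /\ 0 <= Bnd M n k.
Proof.
move=> M0; elim: k => [|k [IH1 IH2]] /=; first by rewrite lexx.
have h : 0 <= n%:R * Bnd M n k by apply: mulr_ge0.
split; first by rewrite lerDl.
exact: addr_ge0.
Qed.

Lemma TDf_comp_le (p : R) n m d (z : 'rV[R]_d) (adj : rel 'I_m) (X : 'I_m -> 'rV[R]_d) (M : R) :
  (forall v, pnorm p (X v - z) <= M) -> pnorm p (z - z) <= M ->
  forall k v f, TDf p n z f (comp_tree adj X k v) (blank_tree z) <= Bnd M n k.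
Proof.
move=> HX Hz.
have M0 : 0 <= M by apply: le_trans Hz; exact: pnorm_ge0.
have Hbb : forall k f, TDf p n z f (blank_tree z) (blank_tree z) <= Bnd M n k.
  by move=> k [|f] /=; apply: le_trans Hz (Bnd_ge n k M0).1.
rewrite /comp_tree.
elim=> [|k IH] v f.
  by case: f => [|f] /=; apply: HX.
rewrite iter_grow_S /=; case: f => [|f] /=.
  by apply: le_trans (HX v) _; rewrite lerDl; apply: mulr_ge0 => //; case: (Bnd_ge n k M0).
case: ifP => _; last first.
  by apply: le_trans (HX v) _; rewrite lerDl; apply: mulr_ge0 => //; case: (Bnd_ge n k M0).
apply: lerD; first exact: HX.
rewrite -map_comp.
set L := map _ _.
have HS : forall tau : 'S_n, \sum_(j < n) TDf p n z f (nth (blank_tree z) L j)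
      (nth (blank_tree z) [::] (tau j)) <= n%:R * Bnd M n k.
  move=> tau.
  have -> : n%:R * Bnd M n k = \sum_(j < n) Bnd M n k.
    by rewrite sumr_const card_ord mulr_natl.
  apply: ler_sum => j _; rewrite nth_nil.
  case: (ltnP j (size L)) => hj.
    rewrite /L (nth_map v); last by move: hj; rewrite size_map.
    exact: IH.
  by rewrite nth_default //; apply: Hbb.
rewrite /Wdist; elim/big_ind: _ => //;
  first [exact: HS | by move=> x y hx hy; rewrite ge_min hx | by move=> tau _; exact: HS].
Qed.

End Part1.
Section Part2.
Variable R : realType.

Lemma powR_invK (p a : R) : 0 < p -> 0 <= a -> (a `^ p) `^ p^-1 = a.
Proof. by move=> p0 a0; rewrite -powRrM mulfV ?gt_eqF // powRr1. Qed.

Lemma norm_coord_le d (x : 'rV[R]_d) i : `|x ord0 i| <= `|x|.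
Proof.
have -> : `|x| = mx_norm x by [].
rewrite mx_normrE.
exact: (le_bigmax 0 (fun ij : 'I_1 * 'I_d => `|x ij.1 ij.2|) (ord0, i)).
Qed.

Lemma pnorm_ge_coord (p : R) d (x : 'rV[R]_d) i : 0 < p ->
  `|x ord0 i| <= pnorm p x.
Proof.
move=> p0; rewrite -[leLHS](powR_invK p0 (normr_ge0 _)) /pnorm.
have pi0 : 0 <= p^-1 by rewrite invr_ge0 ltW.
apply: (ge0_ler_powR pi0); rewrite ?nnegrE ?powR_ge0 //.
  by apply: sumr_ge0 => j _; exact: powR_ge0.
rewrite (bigD1 i) //= lerDl; apply: sumr_ge0 => j _; exact: powR_ge0.
Qed.

Lemma pnorm_ge_norm (p : R) d (x : 'rV[R]_d) : 0 < p -> `|x| <= pnorm p x.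
Proof.
move=> p0; have -> : `|x| = mx_norm x by [].
rewrite mx_normrE; apply: bigmax_le; first exact: pnorm_ge0.
case=> a b _ /=; rewrite [a]ord1; exact: pnorm_ge_coord.
Qed.

Lemma pnorm_le_norm (p : R) d (x : 'rV[R]_d) (B : R) : 0 < p -> `|x| <= B ->
  pnorm p x <= (d%:R * B `^ p) `^ p^-1.
Proof.
move=> p0 xB; rewrite /pnorm.
have B0 : 0 <= B by apply: le_trans xB.
have pi0 : 0 <= p^-1 by rewrite invr_ge0 ltW.
apply: (ge0_ler_powR pi0); rewrite ?nnegrE.
- by apply: sumr_ge0 => j _; exact: powR_ge0.
- by apply: mulr_ge0 => //; exact: powR_ge0.
- have -> : d%:R * B `^ p = \sum_(i < d) B `^ p by rewrite sumr_const card_ord mulr_natl.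
  apply: ler_sum => i _; apply: (ge0_ler_powR (ltW p0)); rewrite ?nnegrE //.
  exact: le_trans (norm_coord_le x i) xB.
Qed.

Lemma pnormN (p : R) d (x : 'rV[R]_d) : pnorm p (- x) = pnorm p x.
Proof. by rewrite /pnorm; congr (_ `^ _); apply: eq_bigr => i _; rewrite mxE normrN. Qed.

Lemma compact_sep d (A : set 'rV[R]_d) y : compact A -> ~ A y ->
  exists2 e : R, 0 < e & forall x, A x -> e <= `|y - x|.
Proof.
move=> cA nAy.
have cl : closed A := compact_closed (@norm_hausdorff _ _) cA.
have : nbhs y (~` A) by apply: open_nbhs_nbhs; split => //; exact: closed_openC.
move/nbhs_ballP => [e e0 sub]; exists e => // x Ax.
rewrite leNgt; apply/negP => h; apply: (sub x) => //.
by rewrite -ball_normE /ball_ /=.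
Qed.

Lemma compact_bnd (V : normedModType R) (A : set V) : compact A ->
  exists M : R, forall x, A x -> `|x| <= M.
Proof.
move/compact_bounded => [M [_ HM]]; exists (M + 1) => x Ax.
by apply: (HM (M + 1)) => //; rewrite ltrDl.
Qed.

Lemma pnorm_sep d (A : set 'rV[R]_d) y (p : R) : 0 < p -> compact A -> ~ A y ->
  exists e U : R, [/\ 0 < e, e <= U & forall x, A x -> e <= pnorm p (y - x) /\ pnorm p (y - x) <= U].
Proof.
move=> p0 cA nAy.
have [e e0 He] := compact_sep cA nAy.
have [B HB] := compact_bnd cA.
exists e, (Num.max e ((d%:R * (`|y| + B) `^ p) `^ p^-1)); split => //.
  by rewrite le_max lexx.
move=> x Ax; split.
  exact: le_trans (He x Ax) (pnorm_ge_norm _ p0).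
rewrite le_max; apply/orP; right; apply: pnorm_le_norm => //.
apply: le_trans (ler_normB _ _) _; rewrite lerD2l; exact: HB.
Qed.

End Part2.
Section Part3.

Lemma entry_cont (T : topologicalType) m n (i : 'I_m) (j : 'I_n) :
  continuous (fun M : 'M[T]_(m, n) => M i j).
Proof.
move=> M A /= hA.
exists (fun i' j' => if (i' == i) && (j' == j) then A else setT).
  move=> i' j' /=; case: ifP => [/andP[/eqP -> /eqP ->]|_] //; exact: filterT.
by move=> N /(_ i j); rewrite !eqxx.
Qed.

Lemma cvg_mx (T : Type) (U : topologicalType) m n (F : set_system T) (f : T -> 'M[U]_(m, n)) (M : 'M[U]_(m, n)) :
  Filter F -> (forall i j, (fun t => f t i j) @ F --> M i j) -> f @ F --> M.
Proof.
move=> FF H A [P nP sPA].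
apply: (@filterS _ _ _ (fun t => forall i j, P i j (f t i j))).
  by move=> t Ht; apply: sPA.
apply: filter_forall => i; apply: filter_forall => j.
exact: (H i j (P i j) (nP i j)).
Qed.

Lemma fst_cont (U V : topologicalType) : continuous (fun q : U * V => q.1).
Proof. by move=> q; apply: cvg_fst. Qed.

Lemma snd_cont (U V : topologicalType) : continuous (fun q : U * V => q.2).
Proof. by move=> q; apply: cvg_snd. Qed.

Lemma within_comp (T U V : topologicalType) (A : set T) (B : set U) (f : T -> U) (g : U -> V) :
  {within A, continuous f} -> (forall x, A x -> B (f x)) -> {within B, continuous g} ->
  {within A, continuous (g \o f)}.
Proof.
move=> cf fAB cg; apply/subspace_continuousP => x Ax.
have hf := (subspace_continuousP _ f).1 cf x Ax.
have hg := (subspace_continuousP _ g).1 cg (f x) (fAB x Ax).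
have hfB : forall W, within B (nbhs (f x)) W -> within A (nbhs x) (f @^-1` W).
  move=> W hW.
  have hW' : nbhs (f x) (fun y => B y -> W y) by exact: hW.
  have h2 : nbhs x (fun t => A t -> B (f t) -> W (f t)) := hf (fun y => B y -> W y) hW'.
  apply: filterS h2 => t H At; exact: H At (fAB t At).
move=> W hW; exact: hfB (hg _ hW).
Qed.

Lemma within_pair (T U V : topologicalType) (A : set T) (f : T -> U) (g : T -> V) :
  {within A, continuous f} -> {within A, continuous g} ->
  {within A, continuous (fun x => (f x, g x))}.
Proof.
move=> cf cg; apply/subspace_continuousP => x Ax.
have hf := (subspace_continuousP _ f).1 cf x Ax.
have hg := (subspace_continuousP _ g).1 cg x Ax.
exact: cvg_pair.
Qed.

Lemma within_mx (T U : topologicalType) m n (A : set T) (f : T -> 'M[U]_(m, n)) :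
  (forall i j, {within A, continuous (fun t => f t i j)}) -> {within A, continuous f}.
Proof.
move=> H; apply/subspace_continuousP => x Ax.
apply: cvg_mx => i j.
exact: (subspace_continuousP _ (fun t => f t i j)).1 (H i j) x Ax.
Qed.

Lemma cont_mx (T U : topologicalType) m n (f : T -> 'M[U]_(m, n)) :
  (forall i j, continuous (fun t => f t i j)) -> continuous f.
Proof. by move=> H x; apply: cvg_mx => i j; exact: H. Qed.

End Part3.
Lemma cont_comp (S T U : topologicalType) (f : S -> T) (g : T -> U) :
  continuous f -> continuous g -> continuous (g \o f).
Proof. by move=> cf cg x; apply: continuous_comp; [exact: cf | exact: cg]. Qed.

Section Main.
Variable R : realType.
Variables (n K : nat) (dim pd cd : nat -> nat).
Variable Omega : set 'rV[R]_(dim 0%N).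
Variable phi : forall k, 'rV[R]_(pd k) -> seq 'rV[R]_(dim k) -> 'rV[R]_(cd k).
Variable psi : forall k, 'rV[R]_(pd k) -> 'rV[R]_(dim k) -> 'rV[R]_(cd k) -> 'rV[R]_(dim k.+1).
Variable Theta : forall k, set 'rV[R]_(pd k).

Lemma feat_theta_ext m (adj : rel 'I_m) X k (th th' : forall j, 'rV[R]_(pd j)) :
  (forall j, (j < k)%N -> th j = th' j) ->
  forall v, feat phi psi th adj X k v = feat phi psi th' adj X k v.
Proof.
elim: k => [|k IH] H v //=.
have E : feat phi psi th adj X k = feat phi psi th' adj X k.
  by apply: funext => u; apply: IH => j hj; apply: H; exact: ltnW.
by rewrite E (H k (ltnSn k)).
Qed.

Lemma feat_adj_ext m (adj adj' : rel 'I_m) X k (th : forall j, 'rV[R]_(pd j)) :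
  (forall u w, adj u w = adj' u w) ->
  forall v, feat phi psi th adj X k v = feat phi psi th adj' X k v.
Proof.
move=> Hadj.
have En : forall v, nbrs adj v = nbrs adj' v.
  by move=> v; rewrite /nbrs; apply: eq_filter => u; exact: Hadj.
elim: k => [|k IH] v //=.
have E : feat phi psi th adj X k = feat phi psi th adj' X k by apply: funext => u; exact: IH.
by rewrite E En.
Qed.

Definition Aset m (adj : rel 'I_m) k : set 'M[R]_(m, dim k) :=
  [set M | exists (X : 'I_m -> 'rV[R]_(dim 0%N)) (th : forall j, 'rV[R]_(pd j)),
     [/\ forall v, Omega (X v), params_ok K Theta th &
         M = \matrix_(v, j) feat phi psi th adj X k v ord0 j]].
Arguments Aset {m} adj k.

Definition Nv m (adj : rel 'I_m) d v (M : 'M[R]_(m, d)) : 'M[R]_(size (nbrs adj v), d) :=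
  \matrix_(i, j) M (nth v (nbrs adj v) i) j.

Definition Gk m (adj : rel 'I_m) k (q : 'rV[R]_(pd k) * 'M[R]_(m, dim k)) : 'M[R]_(m, dim k.+1) :=
  \matrix_(v, j) (@psi k q.1 (row v q.2) (@phi k q.1 (rows_of (Nv adj v q.2)))) ord0 j.

Lemma row_mxF m d (F : 'I_m -> 'rV[R]_d) v : row v (\matrix_(u, j) F u ord0 j) = F v.
Proof. by apply/rowP => j; rewrite !mxE. Qed.

Lemma rows_Nv m (adj : rel 'I_m) d (F : 'I_m -> 'rV[R]_d) v :
  rows_of (Nv adj v (\matrix_(u, j) F u ord0 j)) = map F (nbrs adj v).
Proof.
rewrite /rows_of.
have -> : [seq row i (Nv adj v (\matrix_(u, j) F u ord0 j)) | i <- enum 'I_(size (nbrs adj v))]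
   = [seq F (nth v (nbrs adj v) i) | i : 'I_(size (nbrs adj v)) <- enum 'I_(size (nbrs adj v))].
  by apply: eq_map => i; apply/rowP => j; rewrite !mxE.
rewrite -[in RHS](mkseq_nth v (nbrs adj v)) /mkseq -val_enum_ord -!map_comp.
by [].
Qed.

Lemma Gk_feat m (adj : rel 'I_m) k X (th : forall j, 'rV[R]_(pd j)) :
  Gk adj (th k, \matrix_(v, j) feat phi psi th adj X k v ord0 j)
  = \matrix_(v, j) feat phi psi th adj X k.+1 v ord0 j.
Proof.
apply/matrixP => v j; rewrite !mxE /= row_mxF.
by rewrite (rows_Nv adj (feat phi psi th adj X k)).
Qed.

Lemma Aset0 m (adj : rel 'I_m) (th0 : forall j, 'rV[R]_(pd j)) :
  params_ok K Theta th0 ->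
  Aset adj 0 = [set M | forall v, Omega (row v M)].
Proof.
move=> H0; apply/seteqP; split.
  move=> M [X [th [HX _ ->]]] v /=.
  by rewrite (row_mxF (fun u => feat phi psi th adj X 0 u)).
move=> M HM; exists (fun v => row v M), th0; split => //.
by apply/matrixP => v j; rewrite !mxE.
Qed.

Lemma AsetS m (adj : rel 'I_m) k : (k < K)%N ->
  Aset adj k.+1 = Gk adj (k:=k) @` (@Theta k `*` Aset adj k).
Proof.
move=> hk; apply/seteqP; split.
  move=> M [X [th [HX Hth ->]]].
  exists (th k, \matrix_(v, j) feat phi psi th adj X k v ord0 j).
    by split => //=; [exact: Hth | exists X, th].
  exact: Gk_feat.
move=> _ [[t M] [/= Tt [X [th [HX Hth ->]]]] <-].
pose th2 := @dfwith nat (fun j => 'rV[R]_(pd j)) th k t.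
have E2 : forall j, (j < k)%N -> th2 j = th j.
  by move=> j hj; rewrite /th2 dfwithout // (negbT (gtn_eqF hj)).
have Ek : th2 k = t by rewrite /th2 dfwithin.
exists X, th2; split => //.
  move=> j hj; case: (eqVneq k j) => [<-|ne].
    by rewrite Ek.
  by rewrite /th2 dfwithout //; exact: Hth.
rewrite -Gk_feat Ek.
congr (Gk adj (t, _)); apply/matrixP => v j; rewrite !mxE.
by rewrite (feat_theta_ext _ _ E2).
Qed.


Lemma A0_compact m : compact Omega ->
  compact [set M : 'M[R]_(m, dim 0%N) | forall v, Omega (row v M)].
Proof.
move=> cO.
set S := [set w : 'rV['rV[R]_(dim 0%N)]_m | forall i, Omega (w ord0 i)].
have cS : compact S by apply: (@rV_compact _ m (fun=> Omega)).
pose F := fun w : 'rV['rV[R]_(dim 0%N)]_m => (\matrix_(i, j) (w ord0 i) ord0 j : 'M[R]_(m, dim 0%N)).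
have -> : [set M : 'M[R]_(m, dim 0%N) | forall v, Omega (row v M)] = F @` S.
  apply/seteqP; split.
    move=> M HM; exists (\row_i row i M).
      by move=> i; rewrite mxE; exact: HM.
    by apply/matrixP => i j; rewrite !mxE.
  move=> _ [w Hw <-] v.
  have -> : row v (F w) = w ord0 v by apply/rowP => j; rewrite !mxE.
  exact: Hw.
apply: continuous_compact cS; apply: continuous_subspaceT.
apply: cont_mx => i j.
have -> : (fun t => F t i j) = (fun r : 'rV[R]_(dim 0%N) => r ord0 j) \o (fun t : 'rV['rV[R]_(dim 0%N)]_m => t ord0 i).
  by apply: funext => t; rewrite /F mxE.
apply: cont_comp; exact: entry_cont.
Qed.

Lemma Gk_cont m (adj : rel 'I_m) k : (m <= n)%N ->
  (forall m', (m' <= n)%N ->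
     {within @Theta k `*` setT,
       continuous (fun q : 'rV[R]_(pd k) * 'M[R]_(m', dim k) => @phi k q.1 (rows_of q.2))}) ->
  {within @Theta k `*` setT,
     continuous (fun q : 'rV[R]_(pd k) * ('rV[R]_(dim k) * 'rV[R]_(cd k)) =>
                   @psi k q.1 q.2.1 q.2.2)} ->
  {within @Theta k `*` setT, continuous (Gk adj (k:=k))}.
Proof.
move=> hm hphi hpsi.
apply: within_mx => v j.
pose H := fun q : 'rV[R]_(pd k) * 'M[R]_(m, dim k) =>
  (q.1, (row v q.2, @phi k q.1 (rows_of (Nv adj v q.2)))).
have -> : (fun t => Gk adj t v j) = (fun r : 'rV[R]_(dim k.+1) => r ord0 j) \o
    ((fun q : 'rV[R]_(pd k) * ('rV[R]_(dim k) * 'rV[R]_(cd k)) => @psi k q.1 q.2.1 q.2.2) \o H).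
  by apply: funext => q; rewrite /Gk mxE.
have cg : {within [set: 'rV[R]_(dim k.+1)], continuous (fun r : 'rV[R]_(dim k.+1) => r ord0 j)}.
  by apply: continuous_subspaceT; exact: entry_cont.
have hs : (size (nbrs adj v) <= n)%N.
  apply: leq_trans hm; rewrite /nbrs size_filter.
  by apply: leq_trans (count_size _ _) _; rewrite size_enum_ord.
have cN : {within @Theta k `*` setT, continuous
    (fun q : 'rV[R]_(pd k) * 'M[R]_(m, dim k) => (q.1, Nv adj v q.2))}.
  apply: within_pair; first by apply: continuous_subspaceT; exact: fst_cont.
  apply: continuous_subspaceT; apply: cont_mx => i' j'.
  have -> : (fun t : 'rV[R]_(pd k) * 'M[R]_(m, dim k) => Nv adj v t.2 i' j') =
      (fun M : 'M[R]_(m, dim k) => M (nth v (nbrs adj v) i') j') \o (fun t : 'rV[R]_(pd k) * 'M[R]_(m, dim k) => t.2).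
    by apply: funext => t; rewrite /= mxE.
  apply: cont_comp; [exact: snd_cont | exact: entry_cont].
have cP := within_comp cN (fun q (hq : (@Theta k `*` setT) q) => conj hq.1 I) (hphi _ hs).
have cR : {within @Theta k `*` setT, continuous
    (fun q : 'rV[R]_(pd k) * 'M[R]_(m, dim k) => row v q.2)}.
  apply: continuous_subspaceT; apply: cont_mx => i' j'.
  have -> : (fun t : 'rV[R]_(pd k) * 'M[R]_(m, dim k) => row v t.2 i' j') =
      (fun M : 'M[R]_(m, dim k) => M v j') \o (fun t : 'rV[R]_(pd k) * 'M[R]_(m, dim k) => t.2).
    by apply: funext => t; rewrite /= mxE.
  apply: cont_comp; [exact: snd_cont | exact: entry_cont].
have cF : {within @Theta k `*` setT, continuous
    (fun q : 'rV[R]_(pd k) * 'M[R]_(m, dim k) => q.1)}.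
  by apply: continuous_subspaceT; exact: fst_cont.
have cH : {within @Theta k `*` setT, continuous H}.
  exact: within_pair cF (within_pair cR cP).
have c2 := within_comp cH (fun q (hq : (@Theta k `*` setT) q) => conj hq.1 I) hpsi.
exact: within_comp c2 (fun _ _ => I) cg.
Qed.


Lemma Aset_compact m (adj : rel 'I_m) (th0 : forall j, 'rV[R]_(pd j)) :
  params_ok K Theta th0 -> (m <= n)%N -> compact Omega ->
  (forall k, (k < K)%N -> compact (@Theta k)) ->
  (forall k, (k < K)%N -> forall m', (m' <= n)%N ->
     {within @Theta k `*` setT,
       continuous (fun q : 'rV[R]_(pd k) * 'M[R]_(m', dim k) => @phi k q.1 (rows_of q.2))}) ->
  (forall k, (k < K)%N ->
     {within @Theta k `*` setT,
       continuous (fun q : 'rV[R]_(pd k) * ('rV[R]_(dim k) * 'rV[R]_(cd k)) =>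
                     @psi k q.1 q.2.1 q.2.2)}) ->
  forall k, (k <= K)%N -> compact (Aset adj k).
Proof.
move=> H0 hm cO cT hphi hpsi; elim=> [|k IH] hk.
  rewrite (Aset0 adj H0); exact: A0_compact.
rewrite AsetS //; apply: continuous_compact.
  apply: (@continuous_subspaceW _ _ _ (@Theta k `*` setT)).
    by move=> q [h1 _]; split.
  by apply: Gk_cont => //; [exact: hphi | exact: hpsi].
apply: compact_setX; first exact: cT.
by apply: IH; exact: ltnW.
Qed.

Lemma bigsetU_mem (I : eqType) (T : Type) (s : seq I) (P : pred I) (F : I -> set T) x :
  (\big[setU/set0]_(i <- s | P i) F i) x <-> exists i, [/\ i \in s, P i & F i x].
Proof.
elim: s => [|a s IH]; first by rewrite big_nil; split => // -[i []].
rewrite big_cons; case: ifP => Pa; split.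
- case=> [h|/IH [i [h1 h2 h3]]]; first by exists a; rewrite mem_head.
  by exists i; rewrite inE h1 orbT.
- move=> [i [/predU1P [->|h1] h2 h3]]; first by left.
  by right; apply/IH; exists i.
- by move/IH => [i [h1 h2 h3]]; exists i; rewrite inE h1 orbT.
- move=> [i [/predU1P [->|h1] h2 h3]]; first by rewrite Pa in h2.
  by apply/IH; exists i.
Qed.

Definition gok m (g : {ffun 'I_m * 'I_m -> bool}) : bool :=
  [forall u, forall w, g (u, w) == g (w, u)] && [forall u, ~~ g (u, u)].

Definition adjg m (g : {ffun 'I_m * 'I_m -> bool}) : rel 'I_m := fun u w => g (u, w).

Definition Uset k : set 'rV[R]_(dim k) :=
  \big[setU/set0]_(m <- iota 0 n.+1 | (m <= n)%N)
    \big[setU/set0]_(g : {ffun 'I_m * 'I_m -> bool} | gok g)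
      \big[setU/set0]_(v : 'I_m) ((fun M : 'M[R]_(m, dim k) => row v M) @` Aset (adjg g) k).
Arguments Uset : clear implicits.

Lemma Uset_sub k : Uset k `<=` attainable n K Omega phi psi Theta k.
Proof.
move=> x /bigsetU_mem [m [_ hm /bigsetU_mem [g [_ hg /bigsetU_mem [v [_ _ hx]]]]]].
case: hx => M [X [th [HX Hth ->]]] <-.
exists m, (adjg g), X, v, th; split => //.
  case/andP: hg => /forallP hs /forallP hi.
  split => //; try by move=> u; exact: hi.
  by move=> u w; apply/eqP; move: (hs u) => /forallP /(_ w).
exact: row_mxF (fun u => feat phi psi th (adjg g) X k u) v.
Qed.

Lemma attainable_sub k : attainable n K Omega phi psi Theta k `<=` Uset k.
Proof.
move=> x [m [adj [X [v [th [[hm hsym hirr HX] Hth ->]]]]]].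
pose g := [ffun uw : 'I_m * 'I_m => adj uw.1 uw.2].
have Eg : forall u w, adjg g u w = adj u w by move=> u w; rewrite /adjg ffunE.
apply/bigsetU_mem; exists m; split => //.
  by rewrite mem_iota /= add0n ltnS.
apply/bigsetU_mem; exists g; split => //.
  apply/andP; split; apply/forallP => u.
    by apply/forallP => w; rewrite !ffunE /= hsym.
  by rewrite ffunE /=; exact: hirr.
apply/bigsetU_mem; exists v; split => //.
exists (\matrix_(u, j) feat phi psi th adj X k u ord0 j).
  exists X, th; split => //.
  apply/matrixP => u j; rewrite !mxE.
  by rewrite (feat_adj_ext _ _ _ Eg).
exact: row_mxF (fun u => feat phi psi th adj X k u) v.
Qed.

End Main.

Theorem mainTheorem11 (R : realType) (p : R) (n K : nat)
  (dim pd cd : nat -> nat)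
  (Omega : set 'rV[R]_(dim 0%N)) (z : 'rV[R]_(dim 0%N))
  (phi : forall k, 'rV[R]_(pd k) -> seq 'rV[R]_(dim k) -> 'rV[R]_(cd k))
  (psi : forall k, 'rV[R]_(pd k) -> 'rV[R]_(dim k) -> 'rV[R]_(cd k) -> 'rV[R]_(dim k.+1))
  (Theta : forall k, set 'rV[R]_(pd k))
  (pr dout : nat) (ups : 'rV[R]_pr -> seq 'rV[R]_(dim K) -> 'rV[R]_dout)
  (Theta_r : set 'rV[R]_pr) :
  1 <= p ->
  compact Omega ->
  ~ Omega z ->
  (forall k, (k < K)%N -> compact (Theta k)) ->
  compact Theta_r ->
  (forall k, (k < K)%N -> multiset_fun (phi k)) ->
  (forall k, (k < K)%N -> forall m, (m <= n)%N ->
     {within Theta k `*` setT,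
       continuous (fun q : 'rV[R]_(pd k) * 'M[R]_(m, dim k) => phi k q.1 (rows_of q.2))}) ->
  (forall k, (k < K)%N ->
     {within Theta k `*` setT,
       continuous (fun q : 'rV[R]_(pd k) * ('rV[R]_(dim k) * 'rV[R]_(cd k)) =>
                     psi k q.1 q.2.1 q.2.2)}) ->
  multiset_fun ups ->
  (forall m, (m <= n)%N ->
     {within Theta_r `*` setT,
       continuous (fun q : 'rV[R]_pr * 'M[R]_(m, dim K) => ups q.1 (rows_of q.2))}) ->
  forall k, (k <= K)%N ->
  forall zk : 'rV[R]_(dim k),
  ~ attainable n K Omega phi psi Theta k zk ->
  exists C c : R, [/\ 0 < c, c <= C &
    forall (m : nat) (adj : rel 'I_m) (X : 'I_m -> 'rV[R]_(dim 0%N)) (v : 'I_m)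
           (theta : forall j, 'rV[R]_(pd j)),
      graph_ok n Omega adj X -> params_ok K Theta theta ->
      C * TD p n z (comp_tree adj X k v) (blank_tree z)
        >= pnorm p (zk - feat phi psi theta adj X k v)
      /\ pnorm p (zk - feat phi psi theta adj X k v)
        >= c * TD p n z (comp_tree adj X k v) (blank_tree z)].
Proof.
move=> p1 cO nOz cT cR msym hphi hpsi mups hups k hk zk nzk.
have p0 : 0 < p by apply: lt_le_trans p1; exact: ltr01.
case: (pselect (exists th0 : forall j, 'rV[R]_(pd j), params_ok K Theta th0)) => [[th0 H0]|nth];
  last first.
  exists 1, 1; split => // m adj X v th _ Hth; exfalso; apply: nth; by exists th.
have cU : compact (Uset n K Omega phi psi Theta (k:=k)).
  rewrite /Uset; apply: bigsetU_compact => m hm.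
  apply: bigsetU_compact => g _; apply: bigsetU_compact => v _.
  apply: continuous_compact; last exact: (Aset_compact H0 hm cO cT hphi hpsi hk).
  apply: continuous_subspaceT; apply: cont_mx => i j.
  have -> : (fun M : 'M[R]_(m, dim k) => row v M i j) = (fun M : 'M[R]_(m, dim k) => M v j).
    by apply: funext => M; rewrite mxE.
  exact: entry_cont.
have nU : ~ Uset n K Omega phi psi Theta (k:=k) zk by move=> /Uset_sub.
have [e1 [U1 [e10 e1U1 H1]]] := pnorm_sep p0 cU nU.
have [e2 [U2 [e20 e2U2 H2]]] := pnorm_sep p0 cO nOz.
pose M := Num.max U2 (pnorm p (z - z)).
pose B := Num.max (Bnd M n k) e2.
have B0 : 0 < B by apply: lt_le_trans e20 _; rewrite le_max lexx orbT.
have e2B : e2 <= B by rewrite le_max lexx orbT.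
exists (U1 / e2), (e1 / B); split.
- exact: divr_gt0.
- apply: le_trans (_ : e1 / e2 <= _).
    apply: ler_wpM2l; first exact: ltW.
    by rewrite lef_pV2 // posrE.
  by apply: ler_wpM2r => //; rewrite invr_ge0 ltW.
move=> m adj X v th hg Hth.
have hx : attainable n K Omega phi psi Theta k (feat phi psi th adj X k v).
  by exists m, adj, X, v, th.
have [P1 P2] := H1 _ (attainable_sub hx).
case: hg => _ _ _ HXo.
have HX : forall v', pnorm p (X v' - z) <= M.
  move=> v'; rewrite -opprB pnormN; apply: le_trans (H2 _ (HXo v')).2 _.
  by rewrite le_max lexx.
have Tlo : e2 <= TD p n z (comp_tree adj X k v) (blank_tree z).
  rewrite /TD; apply: le_trans (TDf_root _ _ _ _ _ _).
  rewrite comp_tree_root /= -opprB pnormN; exact: (H2 _ (HXo v)).1.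
have Thi : TD p n z (comp_tree adj X k v) (blank_tree z) <= B.
  apply: le_trans (TDf_comp_le n adj HX _ k v _) _.
    by rewrite le_max lexx orbT.
  by rewrite le_max lexx.
split.
- apply: le_trans P2 _.
  rewrite -[leLHS](divfK (negbT (gt_eqF e20))).
  apply: ler_wpM2l Tlo; apply: divr_ge0; [exact: le_trans (ltW e10) e1U1 | exact: ltW].
- apply: le_trans P1.
  rewrite -[leRHS](divfK (negbT (gt_eqF B0))).
  apply: ler_wpM2l Thi; apply: divr_ge0; exact: ltW.
Qed.
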